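(* Let $k,t\ge1$ and $r\ge1$ be integers and let $G$ be the $(k,t)$-split graph with $r$ parts. If $r=1$ and $t\ge2$, then $a(G)=\kappa(G)$. If $r\ge2$, then $a(G)\ne\kappa(G)$.
   Context: For integers $k,t,r\ge1$, the $(k,t)$-split graph with $r$ parts is the graph whose vertex set is the disjoint union $S_1\cup\dots\cup S_r\cup A_1\cup\dots\cup A_r$ with $|S_i|=k$ and $|A_i|=t$, where $S_1\cup\dots\cup S_r$ is a clique, $A_1\cup\dots\cup A_r$ is an independent set, and each vertex of $A_i$ is adjacent exactly to the vertices of $S_i$. The Laplacian matrix is $L(G)=D(G)-A(G)$; $a(G)$, the algebraic connectivity, is its second smallest eigenvalue (with multiplicity). $\kappa(G)$ is the vertex connectivity of $G$ (minimum size of a vertex set whose removal disconnects $G$). *)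

(* Defs.v *)
From HB Require Import structures.
From mathcomp Require Import all_boot all_order all_algebra algC.
Set Implicit Arguments. Unset Strict Implicit. Unset Printing Implicit Defensive.
Import Order.TTheory GRing.Theory Num.Theory.

(* A simple graph is given by a symmetric irreflexive boolean relation [e]. *)

Section Graph.
Variables (V : finType) (e : rel V).
Local Open Scope ring_scope.

Definition gdeg (x : V) : nat := #|[set y | e x y]|.

(* Laplacian L = D - A, indexed by 'I_#|V| via the canonical enumeration of V *)
Definition laplacian : 'M[algC]_#|V| :=
  \matrix_(i, j)
    (if i == j then (gdeg (enum_val i))%:R
     else - (e (enum_val i) (enum_val j))%:R).

(* Laplacian eigenvalues with multiplicity: the roots (with multiplicity) of
   the characteristic polynomial, sorted increasingly.  (They are all real,
   L being real symmetric, so the sort uses a total order on them.) *)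
Definition lap_eigs : seq algC :=
  sort <=%R (sval (closed_field_poly_normal (char_poly laplacian))).

Definition alg_conn : algC := nth 0 lap_eigs 1.

Definition disconnects (S : {set V}) : bool :=
  [exists x, exists y,
    [&& x \notin S, y \notin S &
        ~~ connect [rel u v | [&& e u v, u \notin S & v \notin S]] x y]].

(* vertex connectivity: minimum size of a disconnecting vertex set
   (convention |V|-1 if there is none, i.e. for complete graphs). *)
Definition vconn : nat :=
  (\big[minn/#|V|.-1]_(S : {set V} | disconnects S) #|S|)%N.

End Graph.

(* Vertex (i, inl a) is the a-th vertex of S_i (|S_i| = k);
   vertex (i, inr c) is the c-th vertex of A_i (|A_i| = t). *)
Definition split_vertex (k t r : nat) : finType :=
  ('I_r * ('I_k + 'I_t))%type.

Definition split_adj (k t r : nat) : rel (split_vertex k t r) :=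
  fun u v =>
    match u.2, v.2 with
    | inl _, inl _ => u != v          (* S_1 u ... u S_r is a clique *)
    | inl _, inr _ => u.1 == v.1      (* A_i joined exactly to S_i *)
    | inr _, inl _ => u.1 == v.1
    | inr _, inr _ => false           (* A_1 u ... u A_r independent *)
    end.

(* Main.v *)
Require Import Defs.
From HB Require Import structures.
From mathcomp Require Import all_boot all_order all_algebra algC.
From mathcomp Require Import ring zify.
Import Order.TTheory GRing.Theory Num.Theory.
Set Implicit Arguments. Unset Strict Implicit. Unset Printing Implicit Defensive.
Local Open Scope ring_scope.

Section Gen.
Variables (V : finType) (e : rel V).
Hypothesis esym : forall x y, e x y = e y x.
Hypothesis eirr : forall x, e x x = false.

Definition Lop (f : V -> algC) y := \sum_x (e x y)%:R * (f y - f x).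

Lemma rowL (v : 'rV[algC]_#|V|) y :
  (v *m laplacian e) 0 (enum_rank y) = Lop (fun x => v 0 (enum_rank x)) y.
Proof.
rewrite mxE (reindex (@enum_rank V)) /=; last first.
  by apply: onW_bij; apply: enum_rank_bij.
rewrite /Lop.
have -> : \sum_j v 0 (enum_rank j) * laplacian e (enum_rank j) (enum_rank y)
  = \sum_j ((j == y)%:R * (v 0 (enum_rank y) * (gdeg e y)%:R)
           - (e j y)%:R * v 0 (enum_rank j)).
  apply: eq_bigr => j _; rewrite /laplacian mxE !enum_rankK (inj_eq enum_rank_inj).
  case: eqVneq => [->|_]; first by rewrite eirr mul1r /= mul0r subr0.

  by rewrite /= mul0r sub0r mulrN mulrC.
rewrite sumrB (bigD1 y) //= eqxx mul1r big1 ?addr0; last first.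
  by move=> j /negbTE ->; rewrite mul0r.
have -> : gdeg e y = (\sum_j e j y)%N.
  rewrite /gdeg -sum1_card big_mkcond /=; apply: eq_bigr => j _.
  by rewrite inE esym; case: (e j y).
rewrite natr_sum mulr_sumr -sumrB; apply: eq_bigr => j _.
by rewrite mulrBr mulrC.
Qed.
End Gen.


Section Split.
Variables k t r : nat.
Notation V := (split_vertex k t r).
Notation e := (@split_adj k t r).

Lemma split_sym (x y : V) : e x y = e y x.
Proof.
case: x y => [i [a|c]] [j [b|d]]; rewrite /split_adj /= //; try exact: (congr1 negb (eq_sym _ _)); exact: eq_sym.
Qed.

Lemma split_irr (x : V) : e x x = false.
Proof. by case: x => [i [a|c]]; rewrite /split_adj /= ?eqxx. Qed.

Definition sig (f : V -> algC) i := \sum_(a < k) f (i, inl a).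
Definition tau (f : V -> algC) i := \sum_(c < t) f (i, inr c).

Lemma sum_ind (i : 'I_r) (X : 'I_r -> algC) : \sum_j (j == i)%:R * X j = X i.
Proof.
rewrite (bigD1 i) //= eqxx mul1r big1 ?addr0 // => j /negbTE ->; by rewrite mul0r.
Qed.

Lemma sumV (F : V -> algC) :
  \sum_x F x = \sum_j (\sum_(a < k) F (j, inl a) + \sum_(c < t) F (j, inr c)).
Proof.
have -> : \sum_x F x = \sum_(p : 'I_r * ('I_k + 'I_t)) F (p.1, p.2).
  by apply: eq_bigr => -[].
rewrite -(pair_bigA _ (fun (j : 'I_r) (z : 'I_k + 'I_t) => F (j, z))) /=.
apply: eq_bigr => j _.
by rewrite big_sumType.
Qed.

Lemma LopA f i c : Lop e f (i, inr c) = k%:R * f (i, inr c) - sig f i.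
Proof.
rewrite /Lop sumV.
rewrite /split_adj /=.
transitivity (\sum_j (j == i)%:R * \sum_(a < k) (f (i, inr c) - f (j, inl a))).
  apply: eq_bigr => j _; rewrite [X in _ + X]big1 ?addr0 ?mulr_sumr //.
  by move=> *; rewrite mulr0n mul0r.
rewrite (bigD1 i) //= eqxx mul1r [X in _ + X]big1 ?addr0; last by move=> j /negbTE ->; rewrite mul0r.
rewrite sumrB sumr_const card_ord /sig.
by rewrite mulr_natl.
Qed.

Lemma LopS f i a : Lop e f (i, inl a) =
  (r * k + t)%:R * f (i, inl a) - \sum_j sig f j - tau f i.
Proof.
rewrite /Lop sumV big_split /=.
have E1 : forall j b, (e (j, inl b) (i, inl a))%:R * (f (i, inl a) - f (j, inl b))
   = f (i, inl a) - f (j, inl b).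
  move=> j b; rewrite /split_adj /=.
  case: eqVneq => [E|_]; first by rewrite E subrr mulr0.
  by rewrite mul1r.
have E2 : forall j c, (e (j, inr c) (i, inl a))%:R * (f (i, inl a) - f (j, inr c))
   = (j == i)%:R * (f (i, inl a) - f (j, inr c)).
  by [].
rewrite (eq_bigr (fun j => \sum_(b < k) (f (i, inl a) - f (j, inl b)))); last first.
  by move=> j _; apply: eq_bigr => b _; apply: E1.
rewrite [X in _ + X](eq_bigr (fun j => (j == i)%:R * \sum_(c < t) (f (i, inl a) - f (j, inr c))));
  last first.
  by move=> j _; rewrite mulr_sumr; apply: eq_bigr => c _; apply: E2.
rewrite [X in _ + X](bigD1 i) //= eqxx mul1r [X in _ + (_ + X)]big1 ?addr0; last first.
  by move=> j /negbTE ->; rewrite mul0r.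
under eq_bigr => j _ do rewrite sumrB sumr_const card_ord.
rewrite sumrB sumr_const card_ord sumrB sumr_const card_ord /sig /tau.
rewrite mulr_natl mulrnDr -mulrnA mulnC.
move: (f (i, inl a) *+ (r * k)) (f (i, inl a) *+ t) => A B.
move: (\sum_(i0 < r) _) (\sum_(i0 < t) _) => C D.
Show.
ring.
Qed.
End Split.

Local Close Scope ring_scope.

Lemma big_minn_le (I : finType) (P : pred I) (F : I -> nat) x0 i :
  P i -> \big[minn/x0]_(j | P j) F j <= F i.
Proof.
move=> Pi; rewrite -big_filter.
have : i \in filter P (index_enum I) by rewrite mem_filter Pi mem_index_enum.
elim: (filter P (index_enum I)) => [|y s IH] //=.
rewrite inE big_cons => /orP [/eqP <-|/IH H]; first exact: geq_minl.
exact: leq_trans (geq_minr _ _) H.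
Qed.

Lemma connect_iso (T : finType) (rl : rel T) x y :
  (forall z, ~~ rl x z) -> connect rl x y -> y = x.
Proof.
move=> H /connectP [[|z p] /= Hp ->] //.
by move: Hp => /andP [Hxz _]; move: (H z); rewrite Hxz.
Qed.

Section VC.
Variables k t r : nat.
Hypothesis hk : 0 < k.
Hypothesis ht : 0 < t.
Hypothesis hr : 0 < r.
Notation V := (split_vertex k t r).
Notation e := (@split_adj k t r).

Definition S0 (i : 'I_r) : {set V} := [set ((i, inl a) : V) | a : 'I_k].

Lemma card_S0 i : #|S0 i| = k.
Proof. by rewrite card_imset ?card_ord // => a b [] ->. Qed.

Lemma inr_S0 i j c : ((j, inr c) : V) \notin S0 i.
Proof. by apply/imsetP => -[a _]. Qed.

Lemma disc_S0 i c (y : V) : y \notin S0 i -> y != (i, inr c) -> disconnects e (S0 i).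
Proof.
move=> yS yx; apply/existsP; exists (i, inr c); apply/existsP; exists y.
rewrite inr_S0 yS /=; apply/negP => /connect_iso H.
have := H _; move=> /(_ _) Hc; move/eqP: yx; apply; apply: Hc => z.
apply/negP => /and3P [Hz _ zS]; move: Hz zS.
case: z => j [a|d] //=; rewrite /split_adj /= => /eqP <-.
by rewrite imset_f.
Qed.

Lemma card_V : #|V| = r * (k + t).
Proof. by rewrite card_prod card_sum !card_ord. Qed.

Lemma vconn_ge : k <= vconn e.
Proof.
rewrite /vconn; apply: (big_ind (fun m => k <= m)).
- by rewrite card_V; nia.
- by move=> x y; rewrite leq_min => -> ->.
move=> S; apply: contraTT; rewrite -ltnNge => HS.
have a0 : 'I_k := Ordinal hk.
pose g (i : 'I_r) : V := (i, inl (odflt a0 [pick a | ((i, inl a) : V) \notin S])).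
have gS i : g i \notin S.
  rewrite /g; case: pickP => [a //|H].
  exfalso; have : S0 i \subset S.
    by apply/subsetP => x /imsetP [a _ ->]; move: (H a); rewrite /= => /negbFE.
  by move/subset_leq_card; rewrite card_S0 leqNgt HS.
set rl := [rel u v | [&& e u v, u \notin S & v \notin S]].
have rsym : connect_sym rl.
  apply: sym_connect_sym => u v /=; rewrite split_sym.
  by case: (e v u); case: (u \in S); case: (v \in S).
have SS : forall (u v : V), u \notin S -> v \notin S -> is_inl u.2 -> is_inl v.2 ->
    connect rl u v.
  move=> u v uS vS; case: u uS => i [b|//] uS; case: v vS => j [b'|//] vS _ _.
  case: (eqVneq ((i, inl b) : V) (j, inl b')) => [->|ne]; first exact: connect0.
  by apply: connect1; rewrite /= uS vS /split_adj /= ne.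
have toG : forall x : V, x \notin S -> connect rl x (g x.1).
  case=> i [b|c] xS; first by apply: SS => //; exact: gS.
  by apply: connect1; rewrite /= xS gS /split_adj /= eqxx.
rewrite negb_exists; apply/forallP => x; rewrite negb_exists; apply/forallP => y.
apply/negP => /and3P [xS yS /negP]; apply.
apply: (connect_trans (toG _ xS)); apply: (connect_trans (SS _ _ (gS _) (gS _) isT isT)).
by rewrite rsym; apply: toG.
Qed.

Lemma vconn_eq i c (y : V) : y \notin S0 i -> y != (i, inr c) -> vconn e = k.
Proof.
move=> yS yx; apply/eqP; rewrite eqn_leq vconn_ge andbT.
rewrite /vconn; apply: (leq_trans (@big_minn_le _ (fun S => disconnects e S) (fun S => #|S|) #|V|.-1 (S0 i) (disc_S0 yS yx))).
by rewrite card_S0.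
Qed.
End VC.

Local Open Scope ring_scope.


Lemma char_conj n (P D : 'M[algC]_n) : P \in unitmx ->
  char_poly (invmx P *m D *m P) = char_poly D.
Proof.
move=> Pu.
set Q := map_mx polyC (invmx P); set Pp := map_mx polyC P.
have QP : Q *m Pp = 1%:M by rewrite -map_mxM mulVmx // map_mx1.
have E : char_poly_mx (invmx P *m D *m P) = Q *m char_poly_mx D *m Pp.
  rewrite /char_poly_mx !map_mxM mulmxBr mulmxBl -/Q -/Pp.
  congr (_ - _); by rewrite -mulmxA -scalar_mxC mulmxA QP mul1mx.
rewrite /char_poly E !det_mulmx mulrC mulrA -det_mulmx.
by rewrite [Pp *m Q]mulmx1C ?det1 ?mul1r.
Qed.

Section Spec.
Variables (V : finType) (e : rel V).
Hypothesis esym : forall x y, e x y = e y x.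
Hypothesis eirr : forall x, e x x = false.
Notation n := #|V|.
Notation L := (laplacian e).

Lemma L_herm : L \is hermsymmx.
Proof.
apply/is_hermitianmxP; rewrite expr0 scale1r; apply/matrixP => i j.
rewrite !mxE eq_sym.
case: eqVneq => [->|_]; first by rewrite rmorph_nat.
by rewrite rmorphN rmorph_nat esym.
Qed.

Definition Pm := spectralmx L.
Definition dd := spectral_diag L.
Definition dl := [seq dd 0 i | i <- enum 'I_n].

Lemma HL : L = invmx Pm *m diag_mx dd *m Pm.
Proof. exact/orthomx_spectralP/hermitian_normalmx/L_herm. Qed.

Lemma Pu : Pm \in unitmx.
Proof. exact: spectral_unit. Qed.

Lemma charL : char_poly L = \prod_(x <- dl) ('X - x%:P).
Proof.
rewrite {1}HL char_conj ?Pu // char_poly_trig; last exact: diag_mx_is_trig.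
rewrite big_map big_enum /=; apply: eq_bigr => i _.
by rewrite mxE eqxx mulr1n.
Qed.

Definition ss := sval (closed_field_poly_normal (char_poly L)).

Lemma ss_prod : char_poly L = \prod_(z <- ss) ('X - z%:P).
Proof.
rewrite /ss; case: closed_field_poly_normal => s /= Hs.
by rewrite {1}Hs (monicP (char_poly_monic L)) scale1r.
Qed.

Lemma perm_ss : perm_eq ss dl.
Proof. by apply: prod_XsubC_eq; rewrite -ss_prod charL. Qed.

Lemma mem_ss x : (x \in ss) = eigenvalue L x.
Proof. by rewrite eigenvalue_root_char ss_prod root_prod_XsubC. Qed.

Lemma real_ss : all (fun x => x \is Num.real) ss.
Proof.
rewrite (perm_all _ perm_ss); apply/allP => x /mapP [i _ ->].
by have /mxOverP := hermitian_spectral_diag_real L_herm; apply.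
Qed.

Lemma eig_row i : row i Pm *m L = dd 0 i *: row i Pm.
Proof.
have E : Pm *m L = diag_mx dd *m Pm.
  by rewrite {1}HL !mulmxA mulmxV ?Pu // mul1mx.
by rewrite -row_mul E row_mul row_diag_mx -scalemxAl -rowE.
Qed.
End Spec.

Section Count.
Variables (V : finType) (e : rel V).
Hypothesis esym : forall x y, e x y = e y x.
Hypothesis eirr : forall x, e x x = false.
Notation n := #|V|.
Notation L := (laplacian e).

Lemma unit_vec0 (v : 'rV[algC]_n) : v *m Pm e = 0 -> v = 0.
Proof.
move=> H; have := congr1 (mulmx^~ (invmx (Pm e))) H.
by rewrite mul0mx mulmxK // Pu.
Qed.

Lemma count0_ss :
  (forall u v : 'rV_n, u *m L = 0 -> v *m L = 0 -> u != 0 -> exists c, v = c *: u) ->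
  (count_mem (0 : algC)%R (ss e) <= 1)%N.
Proof.
move=> Hker; rewrite (permP (perm_ss esym)) /dl count_map.
have inj : forall i j : 'I_n, dd e 0 i = 0 -> dd e 0 j = 0 -> i = j.
  move=> i j di dj; apply/eqP/negPn/negP => nij.
  have ki : row i (Pm e) *m L = 0 by rewrite (eig_row esym) di scale0r.
  have kj : row j (Pm e) *m L = 0 by rewrite (eig_row esym) dj scale0r.
  have nz : row i (Pm e) != 0.
    apply/negP => /eqP Hi; have := unit_vec0; rewrite rowE in Hi.
    move=> /(_ _ Hi) /matrixP /(_ 0 i); rewrite !mxE !eqxx /=.
    by move/eqP; rewrite oner_eq0.
  have [c Hc] := Hker _ _ ki kj nz.
  have : (('e_j : 'rV[algC]_n) - c *: 'e_i) *m Pm e = 0.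
    by rewrite mulmxBl -scalemxAl -!rowE Hc subrr.
  move/(unit_vec0)/matrixP/(_ 0 j); rewrite !mxE !eqxx /= eq_sym (negbTE nij).
  by rewrite mulr0 subr0 => /eqP; rewrite oner_eq0.
rewrite -size_filter.
have U : uniq (filter (preim (dd e 0) (pred1 0)) (enum 'I_n)).
  by rewrite filter_uniq ?enum_uniq.
case Es: (filter _ _) U => [|x [|y s]] //= /andP [].
have : x \in filter (preim (dd e 0) (pred1 0)) (enum 'I_n) by rewrite Es mem_head.
have : y \in filter (preim (dd e 0) (pred1 0)) (enum 'I_n) by rewrite Es !inE eqxx orbT.
rewrite !mem_filter /= => /andP [/eqP dy _] /andP [/eqP dx _].
by rewrite (inj _ _ dx dy) mem_head.
Qed.
End Count.


Section Gen2.
Variables (V : finType) (e : rel V).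
Hypothesis esym : forall x y, e x y = e y x.
Hypothesis eirr : forall x, e x x = false.
Notation n := #|V|.
Notation L := (laplacian e).

Lemma Lop_ext f g y : f =1 g -> Lop e f y = Lop e g y.
Proof. by move=> H; apply: eq_bigr => x _; rewrite !H. Qed.

Lemma eig_of_f f lam : (forall y, Lop e f y = lam * f y) -> (exists y, f y != 0) ->
  lam \in ss e.
Proof.
move=> Hf [y0 Hy0]; rewrite mem_ss; apply/eigenvalueP.
exists (\row_j f (enum_val j)).
  apply/rowP => j; rewrite -(enum_valK j) (rowL esym eirr).
  rewrite (@Lop_ext _ f); last by move=> x; rewrite mxE enum_rankK.
  by rewrite Hf !mxE enum_rankK.
apply/negP => /eqP /rowP /(_ (enum_rank y0)); rewrite !mxE enum_rankK => H.
by rewrite H eqxx in Hy0.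
Qed.

Lemma f_of_eig (v : 'rV[algC]_n) lam : v *m L = lam *: v ->
  forall y, Lop e (fun x => v 0 (enum_rank x)) y = lam * v 0 (enum_rank y).
Proof.
move=> H y; rewrite -(rowL esym eirr) H mxE //.
Qed.

Lemma f_nz (v : 'rV[algC]_n) : v != 0 -> exists y, v 0 (enum_rank y) != 0.
Proof.
move=> Hv; apply/existsP; apply: contraR Hv; rewrite negb_exists => /forallP H.
apply/eqP/rowP => j; rewrite mxE -(enum_valK j).
by move: (H (enum_val j)); rewrite negbK => /eqP.
Qed.

Lemma Lop1 y : Lop e (fun _ => 1) y = 0 * 1.
Proof. by rewrite mul0r /Lop big1 // => x _; rewrite subrr mulr0. Qed.

Lemma zero_ss (y0 : V) : (0 : algC) \in ss e.
Proof.
apply: (@eig_of_f (fun _ => 1)) => //; first exact: Lop1.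
by exists y0; rewrite oner_eq0.
Qed.
End Gen2.


Section R1.
Variables k t r : nat.
Hypothesis hk : (0 < k)%N.
Hypothesis hr1 : r = 1%N.
Notation V := (split_vertex k t r).
Notation e := (@split_adj k t r).
Variable i0 : 'I_r.
Variable f : V -> algC.
Variable lam : algC.
Hypothesis Hf : forall y, Lop e f y = lam * f y.

Lemma ieq (i : 'I_r) : i = i0.
Proof.
apply: ord_inj; have := ltn_ord i; have := ltn_ord i0.
move: (val i) (val i0); rewrite hr1 => [[|?] [|?]] //.
Qed.

Let sg := sig f i0.
Let ta := tau f i0.

Lemma HA c : (k%:R - lam) * f (i0, inr c) = sg.
Proof.
have := Hf (i0, inr c); rewrite LopA => H.
rewrite mulrBl -H /sg; ring.
Qed.

Lemma HS a : ((k + t)%:R - lam) * f (i0, inl a) = sg + ta.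
Proof.
have := Hf (i0, inl a); rewrite LopS => H.
have -> : (k + t)%:R = (r * k + t)%:R :> algC by rewrite hr1 mul1n.
have E : \sum_j sig f j = sg.
  rewrite (bigD1 i0) //= big1 ?addr0 // => j; by rewrite (ieq j) eqxx.
rewrite E in H.
rewrite mulrBl -H /sg /ta; ring.
Qed.

Lemma E1 : (k%:R - lam) * ta = t%:R * sg.
Proof.
rewrite /ta /tau mulr_sumr (eq_bigr (fun _ => sg)); last by move=> c _; exact: HA.
by rewrite sumr_const card_ord mulr_natl.
Qed.

Lemma E2 : ((k + t)%:R - lam) * sg = k%:R * (sg + ta).
Proof.
rewrite {1}/sg /sig mulr_sumr (eq_bigr (fun _ => sg + ta)); last by move=> a _; exact: HS.
by rewrite sumr_const card_ord mulr_natl.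
Qed.

Lemma key : lam * (lam - (k + t)%:R) * sg = 0.
Proof.
have -> : lam * (lam - (k + t)%:R) * sg =
  (k%:R - lam) * (((k + t)%:R - lam) * sg - k%:R * (sg + ta))
  + k%:R * ((k%:R - lam) * ta - t%:R * sg).
  rewrite natrD; ring.
by rewrite E1 E2 !subrr !mulr0 addr0.
Qed.

Lemma knz : (k%:R : algC) != 0.
Proof. by rewrite pnatr_eq0 -lt0n. Qed.

Lemma ktnz : ((k + t)%:R : algC) != 0.
Proof. by rewrite pnatr_eq0 addn_eq0 negb_and -lt0n hk. Qed.

Lemma r1_zero : lam = 0 -> forall x, f x = sg / k%:R.
Proof.
move=> l0.
have hA c : f (i0, inr c) = sg / k%:R.
  by rewrite -(HA c) l0 subr0 mulrC mulKf // knz.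
have ht : ta = t%:R * sg / k%:R.
  by rewrite -E1 l0 subr0 mulrC mulKf // knz.
have hS a : f (i0, inl a) = sg / k%:R.
  have := HS a; rewrite l0 subr0 ht => H.
  apply: (mulfI ktnz); rewrite H natrD.
  have := knz; move: (k%:R : algC) => K KZ.
  field; by [].
case=> i [a|c]; rewrite (ieq i); [exact: hS | exact: hA].
Qed.

Lemma r1_other : lam != 0 -> lam != k%:R -> lam != (k + t)%:R -> forall x, f x = 0.
Proof.
move=> l0 lk lkt.
have s0 : sg = 0.
  have /eqP := key; rewrite !mulf_eq0 (negbTE l0) subr_eq0 (negbTE lkt) /=.
  by move/eqP.
have kl : (k%:R - lam) != 0 by rewrite subr_eq0 eq_sym.
have t0 : ta = 0.
  by apply: (mulfI kl); rewrite E1 s0 !mulr0.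
have klt : ((k + t)%:R - lam) != 0 by rewrite subr_eq0 eq_sym.
case=> i [a|c]; rewrite (ieq i).
  by apply: (mulfI klt); rewrite HS s0 t0 addr0 mulr0.
by apply: (mulfI kl); rewrite HA s0 mulr0.
Qed.
End R1.


Section R2.
Variables k t r : nat.
Hypothesis hk : (0 < k)%N.
Hypothesis ht : (0 < t)%N.
Hypothesis hr : (2 <= r)%N.
Notation V := (split_vertex k t r).
Notation e := (@split_adj k t r).

Definition Xn := ((r - 1) * k + t)%N.
Definition Dn := (Xn * Xn + 4 * k * t)%N.
Definition Bn := (Xn + 2 * k)%N.
Definition sq : algC := sqrtC Dn%:R.
Definition mu : algC := (Bn%:R - sq) / 2.

Lemma sq_gtX : Xn%:R < sq.
Proof.
rewrite /sq -(sqrCK (ler0n _ Xn)) ltr_sqrtC ?qualifE /= ?ler0n ?exprn_ge0 //.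
by rewrite -natrX ltr_nat /Dn; nia.
Qed.

Lemma sq_ltB : sq < Bn%:R.
Proof.
rewrite /sq -(sqrCK (ler0n _ Bn)) ltr_sqrtC ?qualifE /= ?ler0n ?exprn_ge0 //.
by rewrite -natrX ltr_nat /Dn /Bn /Xn; nia.
Qed.

Lemma mu_gt0 : 0 < mu.
Proof. by rewrite /mu divr_gt0 ?ltr0n // subr_gt0 sq_ltB. Qed.

Lemma mu_ltk : mu < k%:R.
Proof.
have -> : mu = k%:R - (sq - Xn%:R) / 2.
  by rewrite /mu /Bn natrD natrM; field.
by rewrite gtrBl divr_gt0 ?ltr0n // subr_gt0 sq_gtX.
Qed.

Lemma Qmu : (r%:R * k%:R + t%:R) * (k%:R - mu) - t%:R * k%:R = mu * (k%:R - mu).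
Proof.
have hX : Xn%:R = (r%:R - 1) * k%:R + t%:R :> algC.
  by rewrite /Xn natrD natrM natrB ?(ltnW hr).
have hD : Dn%:R = sq ^+ 2 by rewrite /sq sqrtCK.
have E : Dn%:R = Xn%:R * Xn%:R + 4 * k%:R * t%:R :> algC.
  by rewrite /Dn natrD !natrM.
apply/eqP; rewrite -subr_eq0; apply/eqP.
transitivity ((sq ^+ 2 - Dn%:R) / 4); last by rewrite hD subrr mul0r.
by rewrite E /mu /Bn natrD natrM hX; field.
Qed.

Definition i0 : 'I_r := Ordinal (leq_trans (isT : (0 < 2)%N) hr).
Definition i1 : 'I_r := Ordinal hr.
Definition dlt (j : 'I_r) : algC := (j == i0)%:R - (j == i1)%:R.

Lemma sum_delta (i : 'I_r) : \sum_j (j == i)%:R = 1 :> algC.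
Proof.
rewrite (bigD1 i) //= eqxx big1 ?addr0 // => j /negbTE ->; done.
Qed.

Lemma sum_dlt : \sum_j dlt j = 0.
Proof. by rewrite /dlt sumrB !sum_delta subrr. Qed.

Definition fmu (x : V) : algC :=
  match x.2 with
  | inl _ => (k%:R - mu) * dlt x.1
  | inr _ => k%:R * dlt x.1
  end.

Lemma fmu_eig y : Lop e fmu y = mu * fmu y.
Proof.
case: y => i [a|c].
  rewrite LopS.
  have -> : \sum_j sig fmu j = 0.
    rewrite (eq_bigr (fun j => k%:R * ((k%:R - mu) * dlt j))); last first.
      by move=> j _; rewrite /sig /fmu /= sumr_const card_ord mulr_natl.
    by rewrite -mulr_sumr -mulr_sumr sum_dlt !mulr0.
  rewrite /tau /fmu /= sumr_const card_ord -mulr_natl natrD natrM.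
  have := Qmu; move: (dlt i) => D Q.
  rewrite mulr1 -[X in _ - X]mulr_natl; apply/eqP; rewrite -subr_eq0; apply/eqP.
  transitivity (((r%:R * k%:R + t%:R) * (k%:R - mu) - t%:R * k%:R - mu * (k%:R - mu)) * D).
    by ring.
  by rewrite Q subrr mul0r.
rewrite LopA /sig /fmu /= sumr_const card_ord -mulr_natl; ring.
Qed.

Lemma mu_ss : mu \in ss e.
Proof.
apply: (eig_of_f (@split_sym k t r) (@split_irr k t r) fmu_eig).
exists (i0, inr (Ordinal ht)); rewrite /fmu /= /dlt eqxx.
have -> : (i0 == i1) = false by [].
by rewrite subr0 mulr1 pnatr_eq0 -lt0n.
Qed.
End R2.


Section Sort.
Variable s : seq algC.
Hypothesis hs : all (fun x => x \is Num.real) s.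
Let u := sort <=%R s.

Lemma u_pw : pairwise <=%R u.
Proof.
rewrite -sorted_pairwise; last by move=> ? ? ?; apply: le_trans.
apply: (sort_sorted_in (P := Num.real)) => //.
by move=> x y xr yr; apply: real_leVge.
Qed.

Lemma u_perm : perm_eq u s.
Proof. exact/permPl/perm_sort. Qed.

Lemma second_le a b : a \in s -> b \in s -> a < b -> nth 0 u 1 <= b.
Proof.
rewrite -!(perm_mem u_perm) => as_ bs ab.
have := u_pw; move: as_ bs.
case: u => [|x0 [|x1 u']] //=.
  by rewrite !inE => /eqP Ea /eqP Eb; move: ab; rewrite Ea Eb ltxx.
rewrite !inE /= => Ha Hb /andP [/andP [x01 /allP x0u] /andP [/allP x1u _]].
case/orP: Hb => [/eqP eb|]; last case/orP => [/eqP -> //|/x1u //].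
exfalso; move: ab; rewrite eb => ab.
have : x0 <= a.
  case/orP: Ha => [/eqP -> //|]; case/orP => [/eqP -> //|/x0u //].
by move=> H; have := lt_le_trans ab H; rewrite ltxx.
Qed.

Lemma second_zero : nth 0 u 1 = 0 -> (forall x, x \in s -> 0 <= x) ->
  (1 < size s)%N -> (2 <= count_mem (0:algC)%R s)%N.
Proof.
move=> H0 Hpos Hsz; rewrite -(permP u_perm).
have Hpos' : forall x, x \in u -> 0 <= x by move=> x; rewrite (perm_mem u_perm); apply: Hpos.
have := u_pw; move: H0 Hpos' Hsz; rewrite -(perm_size u_perm).
case: u => [|x0 [|x1 u']] //= -> Hp _ /andP [/andP [x01 _] _].
have : x0 = 0.
  apply/eqP; rewrite eq_le x01 Hp // inE eqxx //.
by move=> ->; rewrite eqxx.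
Qed.
End Sort.


Lemma sum_ind1 n (c : 'I_n) : \sum_j (j == c)%:R = 1 :> algC.
Proof. rewrite (bigD1 c) //= eqxx big1 ?addr0 // => j /negbTE ->; done. Qed.

Section R1b.
Variables k t r : nat.
Hypothesis hk : (0 < k)%N.
Hypothesis hr1 : r = 1%N.
Notation V := (split_vertex k t r).
Notation e := (@split_adj k t r).
Notation L := (laplacian e).
Let esym := @split_sym k t r.
Let eirr := @split_irr k t r.
Let i0 : 'I_r := @Ordinal r 0 ltac:(by rewrite hr1).

Lemma r1_class x : x \in ss e -> [|| x == 0, x == k%:R | x == (k + t)%:R].
Proof.
rewrite mem_ss => /eigenvalueP [v Hv vnz].
have Hf := f_of_eig esym eirr Hv.
have [y Hy] := f_nz vnz.
apply/negPn/negP; rewrite !negb_or => /and3P [x0 xk xkt].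
have := r1_other hr1 i0 Hf x0 xk xkt y.
by move/eqP; rewrite (negbTE Hy).
Qed.

Lemma r1_count : (count_mem (0:algC)%R (ss e) <= 1)%N.
Proof.
apply: (count0_ss esym) => u v Hu Hv unz.
have Hu' : u *m L = 0 *: u by rewrite scale0r.
have Hv' : v *m L = 0 *: v by rewrite scale0r.
have Cu := r1_zero hk hr1 i0 (f_of_eig esym eirr Hu') erefl.
have Cv := r1_zero hk hr1 i0 (f_of_eig esym eirr Hv') erefl.
have [y Hy] := f_nz unz.
move: Hy; rewrite Cu => Hy.
set cu := sig _ i0 / k%:R in Cu Hy; set cv := sig _ i0 / k%:R in Cv.
exists (cv / cu); apply/rowP => j; rewrite mxE -(enum_valK j) Cu Cv.
by rewrite mulfVK.
Qed.

Lemma k_ss (ht2 : (2 <= t)%N) : (k%:R : algC) \in ss e.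
Proof.
pose c0 : 'I_t := Ordinal (leq_trans (isT : (0 < 2)%N) ht2).
pose c1 : 'I_t := Ordinal ht2.
pose f (x : V) : algC := match x.2 with inl _ => 0 | inr c => (c == c0)%:R - (c == c1)%:R end.
apply: (eig_of_f esym eirr (f:=f)).
  case=> i [a|c].
    rewrite LopS /sig /tau /f /= !big1_eq sumrB !sum_ind1 !subrr !mulr0 !subrr.
    done.
  by rewrite LopA /sig /f /= big1_eq subr0.
exists (i0, inr c0); rewrite /f /=.

by rewrite subr0 oner_eq0.
Qed.
End R1b.

Unset Implicit Arguments.

Theorem mainTheorem8 (k t r : nat) (hk : (1 <= k)%N) (ht : (1 <= t)%N)
    (hr : (1 <= r)%N) :
  ((r == 1%N) && (2 <= t)%N ->
     alg_conn (@split_adj k t r) = (vconn (@split_adj k t r))%:R) /\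
  ((2 <= r)%N ->
     alg_conn (@split_adj k t r) <> (vconn (@split_adj k t r))%:R).
Proof.
have esym := @split_sym k t r; have eirr := @split_irr k t r.
pose i0 : 'I_r := Ordinal hr.
pose c0 : 'I_t := Ordinal ht.
have hs := real_ss esym.
have z := zero_ss esym eirr ((i0, inr c0) : split_vertex k t r).
have -> : alg_conn (@split_adj k t r) = nth 0 (sort <=%R (ss (@split_adj k t r))) 1 by [].
split.
- case/andP => /eqP hr1 ht2.
  have kin := k_ss k hr1 ht2.
  have le1 := second_le hs z kin (eq_ind_r is_true hk (ltr0n _ _)).
  have Hsz : (1 < size (ss (@split_adj k t r)))%N.
    by rewrite (perm_size (perm_ss esym)) size_map size_enum_ord card_V hr1; lia.
  have x1in : nth 0 (sort <=%R (ss (@split_adj k t r))) 1 \in ss (@split_adj k t r).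
    by rewrite -(mem_sort <=%R) mem_nth // size_sort.
  have := r1_class hr1 x1in.
  have c1 : (1 < t)%N := ht2.
  rewrite (@vconn_eq k t r hk ht hr i0 (Ordinal c1) ((i0, inr c0))) ?inr_S0 //.
  case/or3P => /eqP E; rewrite E //.
    exfalso; have := r1_count t hk hr1.
    rewrite leqNgt; move/negP; apply; apply: (second_zero hs E) => //.
    by move=> x /(r1_class hr1) /or3P [] /eqP ->; rewrite ?ler0n.
  exfalso; move: le1; rewrite E ler_nat; lia.
- move=> hr2 E.
  have muin := mu_ss hk ht hr2.
  have le1 := second_le hs z muin (mu_gt0 hk ht hr2).
  move: E; rewrite (@vconn_eq k t r hk ht hr i0 c0 ((Ordinal hr2, inr c0))) ?inr_S0 //.
  move=> E; rewrite E in le1.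
  by have := lt_le_trans (mu_ltk hk ht hr2) le1; rewrite ltxx.
Qed.
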